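(* Let $A\in(0,1)$, $M<0$, $Q>0$, $S>0$ and consider the planar system $$\frac{du}{d\tau}=u^2\big((u+A)(1-u)(u-M)-Qv\big),\qquad \frac{dv}{d\tau}=S(u+A)(u-v)v$$ on $\{u\ge0,\ v\ge0\}$. Put $T=1-A+M$, $L=A(M+1)-Q-M$ and $g(u)=u^3-Tu^2-Lu+AM$. Let $u^*\in(0,1)$ be a root of $g$, $\Delta=(u^*-T)^2-4\big(u^*(u^*-T)-L\big)$, and suppose $T>0$, $L<0$ and $\Delta\ge0$. Let $u^*_\pm=\tfrac12\big(T-u^*\pm\sqrt{\Delta}\big)$, with the root $u^*$ chosen so that $u^*\le u^*_-\le u^*_+$. Set $P_1=(u^*,u^* )$, $P_2=(u^*_-,u^*_-)$ and $P_3=(u^*_+,u^*_+)$. (I) If $P_1=P_2$, then this equilibrium of multiplicity two is an unstable saddle-node if $S<\dfrac{Qu^*}{A+u^*}$, and a stable saddle-node if $S>\dfrac{Qu^*}{A+u^*}$. (II) If $P_2=P_3$, then this equilibrium of multiplicity two is an unstable saddle-node if $S<\dfrac{Q(T-u^* )}{1+A+M-u^*}$, and a stable saddle-node if $S>\dfrac{Q(T-u^* )}{1+A+M-u^*}$.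
   Context: The positive equilibria of the system are the points $(u,u)$ with $u>0$ a root of $g$. A root $u^*\in(0,1)$ of $g$ exists since $g(0)=AM<0<Q=g(1)$. $\Delta$ is the discriminant and $u^*_\pm$ are the roots of the quadratic $g(u)/(u-u^* )=u^2+(u^*-T)u+u^*(u^*-T)-L$. Under these hypotheses $g$ has three roots in $(0,1)$ counting multiplicity. The paper fixes, as a standing convention, the choice of $u^*$ to be the smallest of them. *)

(* Defs.v *)
From Stdlib Require Import Reals Lra.
From Coquelicot Require Import Coquelicot.
Open Scope R_scope.

Definition pdx (F : R -> R -> R) (x y : R) : R := Derive (fun t => F t y) x.
Definition pdy (F : R -> R -> R) (x y : R) : R := Derive (fun t => F x t) y.

Definition jac_tr (F G : R -> R -> R) (x y : R) : R := pdx F x y + pdy G x y.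
Definition jac_det (F G : R -> R -> R) (x y : R) : R :=
  pdx F x y * pdy G x y - pdy F x y * pdx G x y.

Definition d2 (H : R -> R -> R) (x y r1 r2 : R) : R :=
  pdx (pdx H) x y * r1 ^ 2 + 2 * pdy (pdx H) x y * r1 * r2
  + pdy (pdy H) x y * r2 ^ 2.

(* A (codimension-one, multiplicity-two) saddle-node equilibrium:
   an equilibrium whose Jacobian has a simple zero eigenvalue
   (det = 0, trace <> 0), and such that the quadratic coefficient of the
   flow reduced to the center manifold is non-zero, i.e.
   l . D^2(F,G)(p)[r,r] <> 0 for non-zero left/right null vectors l, r. *)
Definition saddle_node (F G : R -> R -> R) (x y : R) : Prop :=
  F x y = 0 /\ G x y = 0 /\
  jac_det F G x y = 0 /\ jac_tr F G x y <> 0 /\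
  exists r1 r2 l1 l2 : R,
    (r1 <> 0 \/ r2 <> 0) /\ (l1 <> 0 \/ l2 <> 0) /\
    pdx F x y * r1 + pdy F x y * r2 = 0 /\
    pdx G x y * r1 + pdy G x y * r2 = 0 /\
    l1 * pdx F x y + l2 * pdx G x y = 0 /\
    l1 * pdy F x y + l2 * pdy G x y = 0 /\
    l1 * d2 F x y r1 r2 + l2 * d2 G x y r1 r2 <> 0.

(* stability is that of the non-zero eigenvalue, which equals the trace *)
Definition stable_saddle_node (F G : R -> R -> R) (x y : R) : Prop :=
  saddle_node F G x y /\ jac_tr F G x y < 0.
Definition unstable_saddle_node (F G : R -> R -> R) (x y : R) : Prop :=
  saddle_node F G x y /\ jac_tr F G x y > 0.

Definition fu (A M Q : R) (u v : R) : R :=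
  u ^ 2 * ((u + A) * (1 - u) * (u - M) - Q * v).
Definition fv (A S : R) (u v : R) : R := S * (u + A) * (u - v) * v.

Definition T_ (A M : R) : R := 1 - A + M.
Definition L_ (A M Q : R) : R := A * (M + 1) - Q - M.
Definition g_ (A M Q : R) (u : R) : R :=
  u ^ 3 - T_ A M * u ^ 2 - L_ A M Q * u + A * M.
Definition Delta_ (A M Q ustar : R) : R :=
  (ustar - T_ A M) ^ 2 - 4 * (ustar * (ustar - T_ A M) - L_ A M Q).
Definition uminus (A M Q ustar : R) : R :=
  (T_ A M - ustar - sqrt (Delta_ A M Q ustar)) / 2.
Definition uplus (A M Q ustar : R) : R :=
  (T_ A M - ustar + sqrt (Delta_ A M Q ustar)) / 2.

(* Main.v *)
Require Import Defs.
From Stdlib Require Import Reals Lra.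
From Coquelicot Require Import Coquelicot.
Open Scope R_scope.

Lemma pdx_ext H K x y : (forall a b, H a b = K a b) -> pdx H x y = pdx K x y.
Proof. intros E; unfold pdx; apply Derive_ext; intros; apply E. Qed.
Lemma pdy_ext H K x y : (forall a b, H a b = K a b) -> pdy H x y = pdy K x y.
Proof. intros E; unfold pdy; apply Derive_ext; intros; apply E. Qed.

Definition fux A M Q x y := 2*x*((x+A)*(1-x)*(x-M) - Q*y)
  + x^2*((1-x)*(x-M) - (x+A)*(x-M) + (x+A)*(1-x)).

Lemma pdx_fu A M Q x y : pdx (fu A M Q) x y = fux A M Q x y.
Proof. unfold pdx, fu, fux; apply is_derive_unique; auto_derive; auto; ring. Qed.
Lemma pdy_fu A M Q x y : pdy (fu A M Q) x y = - Q * x^2.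
Proof. unfold pdy, fu; apply is_derive_unique; auto_derive; auto; ring. Qed.
Lemma pdxx_fu A M Q x y : pdx (pdx (fu A M Q)) x y =
  2*((x+A)*(1-x)*(x-M) - Q*y) + 4*x*((1-x)*(x-M) - (x+A)*(x-M) + (x+A)*(1-x))
  + x^2*(2*(1-x) - 2*(x-M) - 2*(x+A)).
Proof. rewrite (pdx_ext _ (fux A M Q)) by apply pdx_fu.
  unfold pdx, fux; apply is_derive_unique; auto_derive; auto; ring. Qed.
Lemma pdyx_fu A M Q x y : pdy (pdx (fu A M Q)) x y = - 2 * Q * x.
Proof. rewrite (pdy_ext _ (fux A M Q)) by apply pdx_fu.
  unfold pdy, fux; apply is_derive_unique; auto_derive; auto; ring. Qed.
Lemma pdyy_fu A M Q x y : pdy (pdy (fu A M Q)) x y = 0.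
Proof. rewrite (pdy_ext _ (fun a b => - Q * a^2)) by apply pdy_fu.
  unfold pdy; apply is_derive_unique; auto_derive; auto; ring. Qed.

Lemma pdx_fv A S x y : pdx (fv A S) x y = S*(2*x*y - y^2 + A*y).
Proof. unfold pdx, fv; apply is_derive_unique; auto_derive; auto; ring. Qed.
Lemma pdy_fv A S x y : pdy (fv A S) x y = S*(x+A)*(x-2*y).
Proof. unfold pdy, fv; apply is_derive_unique; auto_derive; auto; ring. Qed.
Lemma pdxx_fv A S x y : pdx (pdx (fv A S)) x y = 2*S*y.
Proof. rewrite (pdx_ext _ (fun a b => S*(2*a*b - b^2 + A*b))) by apply pdx_fv.
  unfold pdx; apply is_derive_unique; auto_derive; auto; ring. Qed.
Lemma pdyx_fv A S x y : pdy (pdx (fv A S)) x y = S*(2*x - 2*y + A).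
Proof. rewrite (pdy_ext _ (fun a b => S*(2*a*b - b^2 + A*b))) by apply pdx_fv.
  unfold pdy; apply is_derive_unique; auto_derive; auto; ring. Qed.
Lemma pdyy_fv A S x y : pdy (pdy (fv A S)) x y = -2*S*(x+A).
Proof. rewrite (pdy_ext _ (fun a b => S*(a+A)*(a-2*b))) by apply pdy_fv.
  unfold pdy; apply is_derive_unique; auto_derive; auto; ring. Qed.

Lemma key A M Q S p :
  p > 0 -> p + A > 0 -> S > 0 -> Q > 0 ->
  p^3 - (1-A+M)*p^2 - (A*(M+1)-Q-M)*p + A*M = 0 ->
  3*p^2 - 2*(1-A+M)*p - (A*(M+1)-Q-M) = 0 ->
  6*p - 2*(1-A+M) <> 0 ->
  (S < Q * p / (A + p) -> unstable_saddle_node (fu A M Q) (fv A S) p p) /\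
  (S > Q * p / (A + p) -> stable_saddle_node (fu A M Q) (fv A S) p p).
Proof.
  intros Hp HpA HS HQ Hg Hg' Hg''.
  set (G0 := p^3 - (1-A+M)*p^2 - (A*(M+1)-Q-M)*p + A*M) in *.
  set (G1 := 3*p^2 - 2*(1-A+M)*p - (A*(M+1)-Q-M)) in *.
  assert (E1 : pdx (fu A M Q) p p = Q*p^2).
  { rewrite pdx_fu; unfold fux.
    replace (Q*p^2) with (Q*p^2 + (- 2*p*G0 - p^2*G1)) by (rewrite Hg, Hg'; ring).
    unfold G0, G1; ring. }
  assert (Etr : jac_tr (fu A M Q) (fv A S) p p = p*(Q*p - S*(p+A))).
  { unfold jac_tr; rewrite E1, pdy_fv; ring. }
  assert (SN : jac_tr (fu A M Q) (fv A S) p p <> 0 -> saddle_node (fu A M Q) (fv A S) p p).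
  { intro Htr. split; [|split; [|split; [|split]]].
    - unfold fu. replace 0 with (- p^2 * G0) by (rewrite Hg; ring). unfold G0; ring.
    - unfold fv; ring.
    - unfold jac_det; rewrite E1, pdy_fv, pdy_fu, pdx_fv; ring.
    - exact Htr.
    - exists 1, 1, (S*(p+A)), (-(Q*p)).
      split; [lra|]. split; [right; nra|].
      rewrite E1, pdy_fu, pdx_fv, pdy_fv.
      split; [ring|]. split; [ring|]. split; [ring|]. split; [ring|].
      unfold Defs.d2. rewrite pdxx_fu, pdyx_fu, pdyy_fu, pdxx_fv, pdyx_fv, pdyy_fv.
      replace (S * (p + A) * (
        (2 * ((p + A) * (1 - p) * (p - M) - Q * p) + 4 * p * ((1 - p) * (p - M) - (p + A) * (p - M) + (p + A) * (1 - p)) + p ^ 2 * (2 * (1 - p) - 2 * (p - M) - 2 * (p + A))) * 1 ^ 2 + 2 * (- 2 * Q * p) * 1 * 1 + 0 * 1 ^ 2) +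
        - (Q * p) * (2 * S * p * 1 ^ 2 + 2 * (S * (2 * p - 2 * p + A)) * 1 * 1 + -2 * S * (p + A) * 1 ^ 2))
      with (S*(p+A)*(-2*G0 - 4*p*G1 - p^2*(6*p - 2*(1-A+M)))) by (unfold G0, G1; ring).
      rewrite Hg, Hg'.
      intro H0. 
      assert (S*(p+A)*p^2 <> 0) by (apply Rgt_not_eq; apply Rmult_gt_0_compat; nra).
      apply Hg''. apply (Rmult_eq_reg_l (-(S*(p+A)*p^2))); [|lra]. lra.
  }
  split; intro H.
  - apply Rmult_lt_compat_r with (r := A + p) in H; [|lra].
    unfold Rdiv in H; rewrite Rmult_assoc, Rinv_l in H by lra.
    assert (jac_tr (fu A M Q) (fv A S) p p > 0) by (rewrite Etr; nra).
    split; [apply SN; lra|lra].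
  - apply Rmult_lt_compat_r with (r := A + p) in H; [|lra].
    unfold Rdiv in H; rewrite Rmult_assoc, Rinv_l in H by lra.
    assert (jac_tr (fu A M Q) (fv A S) p p < 0) by (rewrite Etr; nra).
    split; [apply SN; lra|lra].
Qed.

Theorem corollary4 (A M Q S ustar : R) :
  0 < A < 1 -> M < 0 -> Q > 0 -> S > 0 ->
  0 < ustar < 1 -> g_ A M Q ustar = 0 ->
  T_ A M > 0 -> L_ A M Q < 0 -> Delta_ A M Q ustar >= 0 ->
  ustar <= uminus A M Q ustar <= uplus A M Q ustar ->
  (ustar = uminus A M Q ustar -> uminus A M Q ustar < uplus A M Q ustar ->
     (S < Q * ustar / (A + ustar) ->
        unstable_saddle_node (fu A M Q) (fv A S) ustar ustar) /\
     (S > Q * ustar / (A + ustar) ->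
        stable_saddle_node (fu A M Q) (fv A S) ustar ustar)) /\
  (uminus A M Q ustar = uplus A M Q ustar -> ustar < uminus A M Q ustar ->
     (S < Q * (T_ A M - ustar) / (1 + A + M - ustar) ->
        unstable_saddle_node (fu A M Q) (fv A S)
          (uminus A M Q ustar) (uminus A M Q ustar)) /\
     (S > Q * (T_ A M - ustar) / (1 + A + M - ustar) ->
        stable_saddle_node (fu A M Q) (fv A S)
          (uminus A M Q ustar) (uminus A M Q ustar))).
Proof.
  intros HA HM HQ HS Hu Hg HT HL HD Hord.
  unfold g_, T_, L_ in Hg.
  unfold uminus, uplus, Delta_, T_, L_ in *.
  set (D := (ustar - (1 - A + M)) ^ 2 - 4 * (ustar * (ustar - (1 - A + M)) - (A * (M + 1) - Q - M))) in *.
  assert (Hs0 := sqrt_pos D).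
  assert (Hs2 : sqrt D * sqrt D = D) by (apply sqrt_sqrt; lra).
  set (s := sqrt D) in *.
  split.
  - intros E1 E2.
    assert (Hs : s > 0) by lra.
    apply key; try lra.
    + assert (Hsv: s = 1-A+M - 3*ustar) by lra. rewrite Hsv in Hs2. unfold D in Hs2. lra.
  - intros E1 E2.
    assert (Hs : s = 0) by lra.
    set (p := (1 - A + M - ustar - s) / 2) in *.
    assert (HD0 : D = 0) by (rewrite <- Hs2, Hs; ring).
    assert (Hp2 : 2 * p = 1 - A + M - ustar) by (unfold p; lra).
    assert (Hfac : forall u, u ^ 3 - (1 - A + M) * u ^ 2 - (A * (M + 1) - Q - M) * u + A * M
                   = (u - ustar) * (u - p) ^ 2).
    { intro u. unfold D in HD0. 
      transitivity ((u ^ 3 - (1 - A + M) * u ^ 2 - (A * (M + 1) - Q - M) * u + A * M)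
         - (ustar ^ 3 - (1 - A + M) * ustar ^ 2 - (A * (M + 1) - Q - M) * ustar + A * M));
      [rewrite Hg; ring|].
      assert (Hc : ustar * (ustar - (1 - A + M)) - (A * (M + 1) - Q - M) = (1 - A + M - ustar)^2/4) by lra.
      replace (A * (M + 1) - Q - M) with (ustar * (ustar - (1 - A + M)) - (1 - A + M - ustar)^2/4) by lra.
      replace (1 - A + M) with (2*p + ustar) by lra. field. }
    replace (Q * (1 - A + M - ustar) / (1 + A + M - ustar)) with (Q * p / (A + p))
      by (replace (1-A+M-ustar) with (2*p) by lra; replace (1+A+M-ustar) with (2*(A+p)) by lra;
          field; lra).
    apply key; try lra.
    + rewrite Hfac; ring.
    + unfold D in HD0.
      replace (A * (M + 1) - Q - M) with (ustar * (ustar - (1 - A + M)) - (1 - A + M - ustar)^2/4) by lra.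
      replace (1 - A + M) with (2*p + ustar) by lra. field.
Qed.
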